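(* Let $0<\beta<1$, $h\in\mathbb{R}$, and let $\sigma\in\{-1,1\}^n$ have law $\mathbb{P}(\sigma)=Z^{-1}\exp\{\frac{\beta}{n}\sum_{i<j}\sigma_i\sigma_j+h\sum_i\sigma_i\}$. Let $\sigma'$ be obtained from $\sigma$ by choosing a site $i\in\{1,\dots,n\}$ uniformly at random and resampling $\sigma_i$ from its conditional law under this Gibbs measure given $(\sigma_j)_{j\neq i}$, and let $\sigma''$ be obtained from $\sigma'$ in the same way. Let $W,W',W''$ be $\sum_i\sigma_i,\sum_i\sigma_i',\sum_i\sigma_i''$, let $Q_k=\mathbb{P}[W'=W+k\mid\sigma]$, $q_k=\mathbb{E}Q_k$, $Q_{k,k}=\mathbb{P}[W'=W+k,W''=W'+k\mid\sigma]$, let $m=\frac1n\sum_{i=1}^n\sigma_i$, and let $m_0$ be the unique solution of $m=\tanh(\beta m+h)$. Then there is a constant $C$ depending only on $\beta,h$ such that for $k=\pm2$, \[ \Bigl|Q_k-\frac{1-m_0^2}{4}\Bigr|\le C\Bigl(|m-m_0|+\frac1n\Bigr),\qquad |Q_{k,k}-Q_k^2|=O(n^{-1}), \] and \[ \Bigl|q_k-\frac{1-m_0^2}{4}\Bigr|=O(n^{-1/2}),\qquad \mathrm{Var}(Q_k)=O(n^{-1}), \] as $n\to\infty$.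
   Context: $Z$ is the normalizing constant of the Gibbs measure (Curie–Weiss model). *)

(* Defs.v *)
From HB Require Import structures.
From mathcomp Require Import all_boot all_order all_algebra.
From mathcomp Require Import reals.
From mathcomp Require Import sequences exp.
Set Implicit Arguments. Unset Strict Implicit. Unset Printing Implicit Defensive.
Import Order.TTheory GRing.Theory Num.Theory.
Local Open Scope ring_scope.

Section CW.
Variable R : realType.

Definition tanhR (x : R) : R := (expR x - expR (- x)) / (expR x + expR (- x)).

(* configurations sigma in {-1,1}^n, encoded by booleans (true = +1) *)
Definition config (n : nat) := {ffun 'I_n -> bool}.
Definition spin (b : bool) : R := if b then 1 else -1.

Definition magsum n (s : config n) : R := \sum_(i < n) spin (s i).
Definition mag n (s : config n) : R := magsum s / n%:R.

Definition cw_energy (beta h : R) n (s : config n) : R :=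
  beta / n%:R * (\sum_(i < n) \sum_(j < n | (i < j)%N) spin (s i) * spin (s j))
  + h * magsum s.
Definition cw_weight beta h n (s : config n) : R := expR (cw_energy beta h s).
Definition cw_Z beta h n : R := \sum_(s : config n) cw_weight beta h s.
Definition cw_P beta h n (s : config n) : R := cw_weight beta h s / cw_Z beta h n.

Definition setsite n (s : config n) (i : 'I_n) (b : bool) : config n :=
  [ffun j => if j == i then b else s j].

Definition cond_prob beta h n (s : config n) (i : 'I_n) (b : bool) : R :=
  cw_weight beta h (setsite s i b) /
  (cw_weight beta h (setsite s i true) + cw_weight beta h (setsite s i false)).

(* Glauber transition kernel: choose i uniformly, resample sigma_i from its
   conditional law. K s t = P[sigma' = t | sigma = s]. *)
Definition glauber beta h n (s t : config n) : R :=
  \sum_(i < n) (n%:R)^-1 *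
     ((\big[andb/true]_(j < n | j != i) (t j == s j))%:R * cond_prob beta h s i (t i)).

Definition Qk beta h n (k : R) (s : config n) : R :=
  \sum_(t : config n) glauber beta h s t * (magsum t == magsum s + k)%:R.

Definition Qkk beta h n (k : R) (s : config n) : R :=
  \sum_(t : config n) \sum_(u : config n)
     glauber beta h s t * glauber beta h t u *
     ((magsum t == magsum s + k) && (magsum u == magsum t + k))%:R.

Definition qk beta h n (k : R) : R :=
  \sum_(s : config n) cw_P beta h s * Qk beta h k s.

Definition varQk beta h n (k : R) : R :=
  \sum_(s : config n) cw_P beta h s * (Qk beta h k s - qk beta h n k) ^+ 2.

End CW.

(* Main.v *)
Require Import Defs.
From HB Require Import structures.
From mathcomp Require Import all_boot all_order all_algebra.
From mathcomp Require Import reals ring lra.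
From mathcomp Require Import boolp classical_sets functions.
From mathcomp Require Import topology normedtype sequences derive realfun exp.
Import Order.TTheory GRing.Theory Num.Theory.
Import numFieldNormedType.Exports.
Local Open Scope ring_scope.


Section T.
Variable R : realType.

Definition Ef (x : R) : R := expR x ^+ 2 + 1.

Lemma Ef_gt0 x : 0 < Ef x.
Proof. rewrite /Ef; have := expR_gt0 x; nra. Qed.

Lemma tanhE x : tanhR x = 1 - 2 * (Ef x)^-1.
Proof.
rewrite /tanhR /Ef expRN.
have e0 := expR_gt0 x.
have h1 : expR x ^+ 2 + 1 != 0 by apply: lt0r_neq0; nra.
have h2 : expR x != 0 by apply: lt0r_neq0.
by field; rewrite h1 h2.

Qed.

Definition Gf (x : R) : R := x - 1 + 2 * (Ef x)^-1.

Lemma Ef_der (x : R) : is_derive x 1 Ef (2 * expR x * expR x).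
Proof.
have -> : Ef = (@expR R ^+ 2 + cst 1)%R by apply/funext => y; rewrite /Ef /=.
have H := is_deriveD (is_deriveX 2 (is_derive_expR x)) (is_derive_cst (1:R) x 1).
apply: (is_derive_eq H) => /=; by rewrite addr0 expr1 -[_ *: _]/(_ * _).
Qed.

Lemma Einv_der (x : R) :
  is_derive x 1 (fun y => (Ef y)^-1) (- (Ef x) ^- 2 * (2 * expR x * expR x)).
Proof.
have Ex := Ef_gt0 x.
apply: DeriveDef.
  apply: derivableV; first by rewrite gt_eqF.
  by case: (Ef_der x).
rewrite deriveV.
- rewrite derive_val.
  change (- Ef x ^- 2 * (expR x * expR x + expR x * expR x + 0) = - Ef x ^- 2 * (2 * expR x * expR x)).
  ring.
- by rewrite gt_eqF.
- by case: (Ef_der x).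
Qed.

Lemma Gf_der (x : R) :
  is_derive x 1 Gf (1 + 2 * (- (Ef x) ^- 2 * (2 * expR x * expR x))).
Proof.
have -> : Gf = ((id - cst 1) + 2 *: (fun y => (Ef y)^-1))%R.
  by apply/funext => y; rewrite /Gf /=.
have H := is_deriveD (is_deriveB (is_derive_id x 1) (is_derive_cst (1:R) x 1))
   (is_deriveZ 2 (Einv_der x)).
apply: (is_derive_eq H) => /=.
by rewrite subr0.
Qed.

Lemma Gf_der_ge0 (x : R) : 0 <= 1 + 2 * (- (Ef x) ^- 2 * (2 * expR x * expR x)).
Proof.
have Ex := Ef_gt0 x.
have e0 := expR_gt0 x.
rewrite mulNr mulrN -[X in 0 <= X]/(1 - _) subr_ge0 mulrA mulrC mulrA.
rewrite ler_pdivrMr ?exprn_gt0 // mul1r /Ef; rewrite !expr2; have := sqr_ge0 (expR x * expR x - 1); rewrite expr2; nra.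
Qed.

Lemma Gf_mono (a b : R) : a <= b -> Gf a <= Gf b.
Proof.
move=> ab.
apply: (@ger0_derive1_ndecr R Gf a b) => //.
- move=> x _; by case: (Gf_der x).
- by move=> x _; rewrite derive1E (@derive_val _ _ _ _ _ _ _ (Gf_der x)); exact: Gf_der_ge0.
- apply: derivable_within_continuous => x _; by case: (Gf_der x).
Qed.

Lemma tanh_mono (a b : R) : a <= b -> tanhR a <= tanhR b.
Proof.
move=> ab; rewrite !tanhE lerD2l lerN2 ler_pM2l //.
rewrite lef_pV2 ?posrE ?Ef_gt0 // /Ef lerD2r.
rewrite ler_pXn2r ?nnegrE ?expR_ge0 //.
by rewrite ler_expR.
Qed.

Lemma tanh_lip (a b : R) : `|tanhR a - tanhR b| <= `|a - b|.
Proof.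
wlog ab : a b / a <= b.
  move=> W; case: (leP a b) => [|/ltW] ba; first exact: W.
  by rewrite distrC [X in _ <= X]distrC; apply: W.
have t1 := tanh_mono _ _ ab.
have g1 := Gf_mono _ _ ab.
rewrite /Gf in g1.
rewrite !tanhE in t1 *.
rewrite ler0_norm ?subr_le0 // ler0_norm ?subr_le0 //.
lra.
Qed.

Lemma tanh_bound (a : R) : `|tanhR a| <= 1.
Proof.
rewrite tanhE.
have Ea := Ef_gt0 a.
have : 0 < (Ef a)^-1 by rewrite invr_gt0.
have : (Ef a)^-1 <= 1.
  rewrite invf_le1 // /Ef; have := exprn_ge0 2 (expR_ge0 a); lra.
move=> h1 h2; rewrite ler_norml; lra.
Qed.

End T.



Section B.
Variable R : realType.
Variable n : nat.
Implicit Types (s t : config n) (i : 'I_n).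

Lemma spin_sq (b : bool) : spin R b * spin R b = 1.
Proof. by case: b => /=; rewrite ?mulr1 ?mulrNN ?mulr1. Qed.

Lemma spin_norm (b : bool) : `|spin R b| = 1.
Proof. by case: b => /=; rewrite ?normrN normr1. Qed.

Lemma magsum_setsite s i b :
  magsum R (setsite s i b) = magsum R s - spin R (s i) + spin R b.
Proof.
rewrite /magsum (bigD1 i) //= [X in _ = X - _ + _](bigD1 i) //=.
rewrite ffunE eqxx.
have -> : \sum_(j < n | j != i) spin R (setsite s i b j) = \sum_(j < n | j != i) spin R (s j).
  by apply: eq_bigr => j ji; rewrite ffunE (negbTE ji).
lra.
Qed.

Lemma setsite_at s i b : setsite s i b i = b.
Proof. by rewrite ffunE eqxx. Qed.

Lemma magsum_bound s : `|magsum R s| <= n%:R.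
Proof.
rewrite /magsum; apply: (le_trans (ler_norm_sum _ _ _)).
rewrite (eq_bigr (fun _ => 1)); last by move=> j _; rewrite spin_norm.
by rewrite sumr_const card_ord.
Qed.

Lemma pair_sum (a : 'I_n -> R) : (forall i, a i * a i = 1) ->
  2 * (\sum_(i < n) \sum_(j < n | (i < j)%N) a i * a j) = (\sum_(i < n) a i) ^+ 2 - n%:R.
Proof.
move=> a1.
have E1 : forall i, \sum_(j < n | (i < j)%N) a i * a j = \sum_(j < n) (i < j)%N%:R * (a i * a j).
  move=> i; rewrite big_mkcond /=; apply: eq_bigr => j _.
  by case: (i < j)%N; rewrite ?mul1r ?mul0r.
have Esq : (\sum_(i < n) a i) ^+ 2 = \sum_(i < n) \sum_(j < n) a i * a j.
  rewrite expr2 big_distrl /=; apply: eq_bigr => i _; by rewrite big_distrr.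
have split3 : forall i j : 'I_n, a i * a j = (i < j)%N%:R * (a i * a j) + (j < i)%N%:R * (a i * a j)
     + (i == j)%:R * (a i * a j).
  move=> i j; case: (ltngtP i j) => [ij|ji|/val_inj ->].
  - rewrite (_ : (i == j) = false); last by apply/eqP => e; move: ij; rewrite e ltnn.
    by rewrite mul1r !mul0r !addr0.
  - rewrite (_ : (i == j) = false); last by apply/eqP => e; move: ji; rewrite e ltnn.
    by rewrite mul1r !mul0r add0r addr0.
  - by rewrite eqxx mul1r !mul0r !add0r.
have Esp : \sum_(i < n) \sum_(j < n) a i * a j =
  \sum_(i < n) \sum_(j < n) (i < j)%N%:R * (a i * a j) + \sum_(i < n) \sum_(j < n) (j < i)%N%:R * (a i * a j)
  + \sum_(i < n) \sum_(j < n) (i == j)%:R * (a i * a j).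
  rewrite -!big_split; apply: eq_bigr => i _; rewrite -!big_split; apply: eq_bigr => j _; exact: split3.
have S3 : \sum_(i < n) \sum_(j < n) (i == j)%:R * (a i * a j) = n%:R.
  rewrite (eq_bigr (fun _ => 1)) ?sumr_const ?card_ord //.
  move=> i _; rewrite (bigD1 i) //= eqxx mul1r a1 big1 ?addr0 // => j ji.
  by rewrite eq_sym (negbTE ji) mul0r.
have S2 : \sum_(i < n) \sum_(j < n) (j < i)%N%:R * (a i * a j) = \sum_(i < n) \sum_(j < n) (i < j)%N%:R * (a i * a j).
  rewrite exchange_big /=; apply: eq_bigr => i _; apply: eq_bigr => j _; by rewrite mulrC [a j * _]mulrC mulrC.
rewrite Esq Esp S3 S2 (eq_bigr _ (fun i _ => E1 i)).
lra.
Qed.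


Variables beta h : R.

Definition Phi (x : R) : R := expR (beta / n%:R * ((x ^+ 2 - n%:R) / 2) + h * x).

Lemma weightE s : cw_weight beta h s = Phi (magsum R s).
Proof.
rewrite /cw_weight /cw_energy /Phi; congr expR; congr (_ * _ + _).
have := pair_sum (fun i => spin R (s i)) (fun i => spin_sq (s i)).
rewrite -/(magsum R s) => <-; lra.
Qed.

Definition afield (A : R) : R := beta / n%:R * A + h.
Definition cfield (A : R) : R := beta / n%:R * ((A ^+ 2 + 1 - n%:R) / 2) + h * A.

Lemma Phi_p A : Phi (A + 1) = expR (cfield A) * expR (afield A).
Proof. by rewrite -expRD /Phi /cfield /afield; apply: congr1; move: (beta / n%:R) => c; field. Qed.

Lemma Phi_m A : Phi (A - 1) = expR (cfield A) * expR (- afield A).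
Proof. by rewrite -expRD /Phi /cfield /afield; apply: congr1; move: (beta / n%:R) => c; field. Qed.

Lemma Phi_pm_tanh A : Phi (A + 1) * (1 - tanhR (afield A)) = Phi (A - 1) * (1 + tanhR (afield A)).
Proof.
rewrite Phi_p Phi_m /tanhR.
have p0 := expR_gt0 (afield A); have q0 := expR_gt0 (- afield A).
have h1 : expR (afield A) + expR (- afield A) != 0 by apply: lt0r_neq0; lra.
by field.
Qed.

Lemma cond_probE s i b : cond_prob beta h s i b =
  (1 + spin R b * tanhR (afield (magsum R s - spin R (s i)))) / 2.
Proof.
rewrite /cond_prob !weightE !magsum_setsite /=.
set A := magsum R s - spin R (s i).
have p0 := expR_gt0 (afield A); have q0 := expR_gt0 (- afield A).
have c0 := expR_gt0 (cfield A).
have h1 : expR (afield A) + expR (- afield A) != 0 by apply: lt0r_neq0; lra.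
have h2 : expR (cfield A) != 0 by apply: lt0r_neq0.
rewrite -[A + -1]/(A - 1) Phi_p Phi_m /tanhR.
have h3 : expR (cfield A) * expR (afield A) + expR (cfield A) * expR (- afield A) != 0 by apply: lt0r_neq0; rewrite -mulrDr; apply: mulr_gt0 => //; lra.
case: b => /=; rewrite ?Phi_p ?Phi_m ?mul1r ?mulN1r; by field; rewrite h1 h3.
Qed.


Definition agree s i t : bool := \big[andb/true]_(j < n | j != i) (t j == s j).

Lemma agree_set s i b : agree s i (setsite s i b).
Proof.
rewrite /agree big_andE; apply/forallP => j; apply/implyP => ji.
by rewrite ffunE (negbTE ji).
Qed.

Lemma agree_eq s i t : agree s i t -> t = setsite s i (t i).
Proof.
rewrite /agree big_andE => /forallP H; apply/ffunP => j; rewrite ffunE.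
case: eqP => [->//|/eqP ji]; by have /implyP/(_ ji)/eqP := H j.
Qed.

Lemma sum_agree s i (F : config n -> R) :
  \sum_(t : config n) (agree s i t)%:R * F t = F (setsite s i true) + F (setsite s i false).
Proof.
have ne : setsite s i false != setsite s i true.
  by apply/eqP => /(congr1 (fun t => t i)); rewrite !setsite_at.
rewrite (bigD1 (setsite s i true)) //= (bigD1 (setsite s i false)) //= !agree_set !mul1r.
rewrite big1 ?addr0 // => t /andP [t1 t2].
case A: (agree s i t); last by rewrite mul0r.
move: t1 t2; rewrite (agree_eq _ _ _ A); case: (t i); by rewrite eqxx.
Qed.

Lemma magsum_set_eq s i b k :
  (magsum R (setsite s i b) == magsum R s + k) = (spin R b - spin R (s i) == k).
Proof.
rewrite magsum_setsite; apply/eqP/eqP => H; lra.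
Qed.

Definition Psi (e m : R) : R := ((1 - e * m) / 2) * ((1 + e * tanhR (beta * m + beta / n%:R * e + h)) / 2).

Lemma neq_R (x y : R) : x != y -> (x == y) = false.
Proof. exact: negbTE. Qed.

Lemma QkE (e : R) s : (0 < n)%N -> (e = 1 \/ e = -1) ->
  Qk beta h (2 * e) s = Psi e (mag R s).
Proof.
move=> n0 he.
rewrite /Qk.
under eq_bigr => t _ do rewrite /glauber big_distrl /=.
rewrite exchange_big /=.
have term : forall i, \sum_(t : config n) n%:R^-1 * ((agree s i t)%:R * cond_prob beta h s i (t i))
        * (magsum R t == magsum R s + 2 * e)%:R
  = n%:R^-1 * ((1 - e * spin R (s i)) / 2) *
      ((1 + e * tanhR (afield (magsum R s + e))) / 2).
  move=> i.
  under eq_bigr => t _ do rewrite -mulrA mulrCA -mulrA.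
  rewrite sum_agree !setsite_at !magsum_set_eq !cond_probE.
  move: (n%:R^-1) => c.
  case: he => ->; case: (s i) => /=; rewrite ?opprK;
  case: eqP => H; case: eqP => H'; rewrite /= ?mulr1 ?mulr0;
  (try by exfalso; lra); (try by exfalso; apply: H; lra); (try by exfalso; apply: H'; lra); by field.
rewrite (eq_bigr _ (fun i _ => term i)).
rewrite -big_distrl /= -big_distrr /= -big_distrl /= sumrB sumr_const card_ord -mulr_sumr -/(magsum R s).
rewrite /Psi /mag /afield.
have nn : n%:R != 0 :> R by rewrite pnatr_eq0 -lt0n.
set T := tanhR _; set T' := tanhR _.
have -> : T' = T by rewrite /T /T'; congr tanhR; field.
by field.
Qed.



Lemma QkkE (e : R) s : (0 < n)%N -> (e = 1 \/ e = -1) ->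
  Qkk beta h (2 * e) s = Psi e (mag R s) * Psi e (mag R s + 2 * e / n%:R).
Proof.
move=> n0 he.
rewrite -QkE // /Qkk /Qk big_distrl /=; apply: eq_bigr => t _.
have -> : \sum_(u : config n) glauber beta h s t * glauber beta h t u *
     ((magsum R t == magsum R s + 2 * e) && (magsum R u == magsum R t + 2 * e))%:R
  = glauber beta h s t * (magsum R t == magsum R s + 2 * e)%:R * Qk beta h (2 * e) t.
  rewrite /Qk big_distrr /=; apply: eq_bigr => u _.
  case: (magsum R t == _); case: (magsum R u == _); rewrite /= ?mulr1 ?mulr0 ?mul0r //.
rewrite QkE //.
case: eqP => H; last by rewrite !mulr0 !mul0r.
rewrite /mag H; congr (_ * _ * Psi e _).
have nn : n%:R != 0 :> R by rewrite pnatr_eq0 -lt0n.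
by field.
Qed.

End B.


Section C.
Variable R : realType.

Lemma prod_bound (u u0 v v0 : R) : `|v| <= 2 -> `|u0| <= 2 ->
  `|u * v - u0 * v0| <= 2 * `|u - u0| + 2 * `|v - v0|.
Proof.
move=> hv hu0.
have -> : u * v - u0 * v0 = (u - u0) * v + u0 * (v - v0) by ring.
apply: (le_trans (ler_normD _ _)); rewrite !normrM.
have := normr_ge0 (u - u0); have := normr_ge0 (v - v0); nra.
Qed.

Variable n : nat.
Variables beta h m0 : R.
Hypothesis b0 : 0 <= beta.
Hypothesis b1 : beta <= 1.
Hypothesis hm0 : m0 = tanhR (beta * m0 + h).
Hypothesis n0 : (0 < n)%N.

Lemma m0_bound : `|m0| <= 1.
Proof. rewrite hm0; exact: tanh_bound. Qed.

Lemma ninv_ge0 : 0 <= n%:R^-1 :> R.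
Proof. by rewrite invr_ge0 ler0n. Qed.

Lemma Psi_P1 e m : (e = 1 \/ e = -1) ->
  `|Psi R n beta h e m - (1 - m0 ^+ 2) / 4| <= `|m - m0| + n%:R^-1.
Proof.
move=> he.
rewrite /Psi; set T := tanhR _.
have hT : `|T - m0| <= `|m - m0| + n%:R^-1.
  rewrite [X in `|T - X|]hm0; apply: (le_trans (tanh_lip _ _ _)).
  have -> : beta * m + beta / n%:R * e + h - (beta * m0 + h) = beta * (m - m0) + beta * (e / n%:R) by ring.
  apply: (le_trans (ler_normD _ _)); rewrite !normrM (ger0_norm b0).
  have -> : `|e| = 1 by case: he => ->; rewrite ?normrN normr1.
  rewrite mul1r (ger0_norm ninv_ge0).
  by rewrite lerD // ler_piMl // ninv_ge0.
have hTb : `|T| <= 1 by exact: tanh_bound.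
have hm := m0_bound.
have key : forall u v u0 v0 : R, `|v| <= 2 -> `|u0| <= 2 -> `|u - u0| = `|m - m0| -> `|v - v0| <= `|m - m0| + n%:R^-1 ->
    `|u / 2 * (v / 2) - u0 * v0 / 4| <= `|m - m0| + n%:R^-1.
  move=> u v u0 v0 hv hu0 huu hvv.
  have -> : u / 2 * (v / 2) - u0 * v0 / 4 = (u * v - u0 * v0) / 4 by field.
  rewrite normrM [`|4^-1|]ger0_norm ?invr_ge0 // ler_pdivrMr //; have := prod_bound u u0 v v0 hv hu0.
  rewrite huu; have := ninv_ge0; have := normr_ge0 (m - m0); lra.
idtac.
case: he => ->; [rewrite (_ : 1 - m0^+2 = (1 - 1 * m0)*(1 + 1 * m0)); last ring
   | rewrite (_ : 1 - m0^+2 = (1 - -1 * m0)*(1 + -1 * m0)); last ring]; apply: key;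
  try first [ by apply: (le_trans (ler_normD _ _)); rewrite normr1 ?normrN normrM ?normrN normr1 mul1r; lra
        | by congr (`|_|); ring | by rewrite -[RHS]normrN; congr `|_|; ring
        | by rewrite (_ : _ - _ = T - m0) //; ring
        | by rewrite (_ : 1 + -1 * T - (1 + -1 * m0) = -(T - m0)) ?normrN //; ring ].
Qed.




Lemma Psi_P3 e m : (e = 1 \/ e = -1) -> `|m| <= 1 -> `|Psi R n beta h e m| <= 1.
Proof.
move=> he hm; rewrite /Psi; set T := tanhR _.
have hT : `|T| <= 1 by exact: tanh_bound.
have He : `|e| = 1 by case: he => ->; rewrite ?normrN normr1.
rewrite normrM !normrM (ger0_norm (_ : 0 <= 2^-1 :> R)) ?invr_ge0 //.
have hu : `|1 - e * m| <= 2.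
  apply: (le_trans (ler_normD _ _)); rewrite normrN normr1 normrM He; lra.
have hv : `|1 + e * T| <= 2.
  apply: (le_trans (ler_normD _ _)); rewrite normr1 normrM He; lra.
have := normr_ge0 (1 - e * m); have := normr_ge0 (1 + e * T).
move: (`|1 - e * m|) (`|1 + e * T|) hu hv => a b ha hb h1 h2.
have -> : a * 2^-1 * (b * 2^-1) = (a * b) / 4 by field.
rewrite ler_pdivrMr //; nra.
Qed.

Lemma Psi_P2 e m : (e = 1 \/ e = -1) -> `|m| <= 1 ->
  `|Psi R n beta h e (m + 2 * e / n%:R) - Psi R n beta h e m| <= 2 / n%:R.
Proof.
move=> he hm; rewrite /Psi.
set T' := tanhR (beta * (m + _) + _ + _); set T := tanhR (beta * m + _ + _).
have He : `|e| = 1 by case: he => ->; rewrite ?normrN normr1.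
have hT' : `|T'| <= 1 by exact: tanh_bound.
have hTT : `|T' - T| <= 2 / n%:R.
  apply: (le_trans (tanh_lip _ _ _)).
  have -> : beta * (m + 2 * e / n%:R) + beta / n%:R * e + h - (beta * m + beta / n%:R * e + h)
     = beta * (2 * (e / n%:R)) by ring.
  rewrite !normrM He (ger0_norm b0) mul1r (ger0_norm ninv_ge0) ger0_norm //.
  by apply: ler_piMl => //; rewrite mulr_ge0 ?ninv_ge0.
have hu : `|1 - e * m| <= 2.
  apply: (le_trans (ler_normD _ _)); rewrite normrN normr1 normrM He; lra.
have hv : `|1 + e * T'| <= 2.
  apply: (le_trans (ler_normD _ _)); rewrite normr1 normrM He; lra.
have hpb := prod_bound (1 - e * (m + 2 * e / n%:R)) (1 - e * m) (1 + e * T') (1 + e * T) hv hu.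
have E1 : `|1 - e * (m + 2 * e / n%:R) - (1 - e * m)| = 2 / n%:R.
  have -> : 1 - e * (m + 2 * e / n%:R) - (1 - e * m) = - (e * e * (2 / n%:R)) by ring.
  by rewrite normrN !normrM He !mul1r (ger0_norm ninv_ge0) ger0_norm.
have E2 : `|1 + e * T' - (1 + e * T)| = `|T' - T|.
  have -> : 1 + e * T' - (1 + e * T) = e * (T' - T) by ring.
  by rewrite normrM He mul1r.
rewrite E1 E2 in hpb.
have nn : n%:R != 0 :> R by rewrite pnatr_eq0 -lt0n.
have -> : (1 - e * (m + 2 * e / n%:R)) / 2 * ((1 + e * T') / 2) - (1 - e * m) / 2 * ((1 + e * T) / 2)
  = ((1 - e * (m + 2 * e / n%:R)) * (1 + e * T') - (1 - e * m) * (1 + e * T)) / 4 by field.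
rewrite normrM [`|4^-1|]ger0_norm ?invr_ge0 // ler_pdivrMr //.
have : 0 <= 2 / n%:R :> R by rewrite mulr_ge0 ?ninv_ge0.
lra.
Qed.

End C.


Section D.
Variable R : realType.
Variable n : nat.
Variables beta h : R.

Definition flip (s : config n) i : config n := setsite s i (~~ s i).

Lemma flipK i : cancel (flip ^~ i) (flip ^~ i).
Proof.
move=> s; apply/ffunP => j; rewrite /flip !ffunE.
case: eqP => [->|//]; by rewrite eqxx negbK.
Qed.

Lemma flip_identity i (f : R -> R) :
  \sum_(s : config n) cw_weight beta h s *
     (f (magsum R s - spin R (s i)) * (spin R (s i) - tanhR (afield R n beta h (magsum R s - spin R (s i))))) = 0.
Proof.
pose G := fun s : config n => cw_weight beta h s *
     (f (magsum R s - spin R (s i)) * (spin R (s i) - tanhR (afield R n beta h (magsum R s - spin R (s i))))).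
rewrite -/(\sum_s G s).
have HG : forall s, G s + G (flip s i) = 0.
  move=> s; rewrite /G /flip !weightE magsum_setsite setsite_at.
  set A := magsum R s - spin R (s i).
  have -> : magsum R s - spin R (s i) + spin R (~~ s i) - spin R (~~ s i) = A by rewrite /A; ring.
  have -> : magsum R s = A + spin R (s i) by rewrite /A; ring.
  set t := tanhR _.
  have := Phi_pm_tanh R n beta h A; rewrite -/t.
  case: (s i) => /=; move: (Phi R n beta h (A + 1)) (Phi R n beta h (A - 1)) => p q E.
  - have -> : p * (f A * (1 - t)) + q * (f A * (-1 - t)) = f A * (p * (1 - t) - q * (1 + t)) by ring.
    by rewrite E subrr mulr0.
  - have -> : q * (f A * (-1 - t)) + p * (f A * (1 - t)) = f A * (p * (1 - t) - q * (1 + t)) by ring.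
    by rewrite E subrr mulr0.
have : \sum_s G s = \sum_s G (flip s i) by apply: reindex_inj; exact: can_inj (flipK i).
move=> H.
have : \sum_s G s + \sum_s G s = 0.
  by rewrite [X in X + _ = _]H -big_split /= big1 // => s _; rewrite addrC HG.
lra.
Qed.


Lemma term_gen (x sg T d c : R) : `|x| <= 2 -> sg * sg = 1 -> `|sg| = 1 -> `|T| <= 1 ->
  `|d| <= c -> c <= 1 ->
  x * (sg - T) - 5 * c <= (x - sg * c) * (sg - (T + d)).
Proof.
move=> hx hs hs1 hT hd c1.
have c0 : 0 <= c by apply: le_trans hd.
have h1 : x * d <= 2 * c.
  apply: (le_trans (ler_norm _)); rewrite normrM.
  have := normr_ge0 x; have := normr_ge0 d; nra.
have h2 : - 1 <= sg * T.
  have : `|sg * T| <= 1 by rewrite normrM hs1 mul1r.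
  by rewrite ler_norml => /andP [].
have h3 : - c <= sg * d.
  have : `|sg * d| <= c by rewrite normrM hs1 mul1r.
  by rewrite ler_norml => /andP [].
have h2' : - c <= c * (sg * T) by nra.
have h3' : - c <= c * (sg * d) by nra.
have -> : (x - sg * c) * (sg - (T + d)) = x * (sg - T) - x * d - c * (sg * sg) + c * (sg * T) + c * (sg * d) by ring.
rewrite hs; lra.
Qed.

Variable m0 : R.
Hypothesis b0 : 0 <= beta.
Hypothesis b1 : beta <= 1.
Hypothesis hm0 : m0 = tanhR (beta * m0 + h).
Hypothesis n0 : (0 < n)%N.

Definition gsum (s : config n) := \sum_(i < n) ((magsum R s - spin R (s i)) / n%:R - m0) *
      (spin R (s i) - tanhR (afield R n beta h (magsum R s - spin R (s i)))).

Lemma sum_g : \sum_(s : config n) cw_weight beta h s *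
  (\sum_(i < n) ((magsum R s - spin R (s i)) / n%:R - m0) *
      (spin R (s i) - tanhR (afield R n beta h (magsum R s - spin R (s i))))) = 0.
Proof.
under eq_bigr => s _ do rewrite big_distrr /=.
rewrite exchange_big /= big1 // => i _.
exact: (flip_identity i (fun A => A / n%:R - m0)).
Qed.

Lemma pointwise (s : config n) :
  n%:R * ((mag R s - m0) * (mag R s - tanhR (beta * mag R s + h))) - 5 <=
  \sum_(i < n) ((magsum R s - spin R (s i)) / n%:R - m0) *
      (spin R (s i) - tanhR (afield R n beta h (magsum R s - spin R (s i)))).
Proof.
have nn : n%:R != 0 :> R by rewrite pnatr_eq0 -lt0n.
have n1 : 1 <= n%:R :> R by rewrite ler1n.
set T := tanhR (beta * mag R s + h).
set x := mag R s - m0.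
have hx : `|x| <= 2.
  apply: (le_trans (ler_normB _ _)).
  have := m0_bound R beta h m0 hm0.
  have : `|mag R s| <= 1.
    rewrite /mag normrM (ger0_norm (ninv_ge0 R n)) ler_pdivrMr ?ltr0n // mul1r.
    exact: magsum_bound.
  lra.
have c1 : n%:R^-1 <= 1 :> R by rewrite invf_le1 ?ltr0n.
have key : forall i, x * (spin R (s i) - T) - 5 * n%:R^-1 <=
    ((magsum R s - spin R (s i)) / n%:R - m0) *
      (spin R (s i) - tanhR (afield R n beta h (magsum R s - spin R (s i)))).
  move=> i.
  have -> : (magsum R s - spin R (s i)) / n%:R - m0 = x - spin R (s i) * n%:R^-1 by rewrite /x /mag; ring.
  have -> : tanhR (afield R n beta h (magsum R s - spin R (s i))) =
     T + (tanhR (afield R n beta h (magsum R s - spin R (s i))) - T) by ring.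
  apply: term_gen => //; first exact: spin_sq; first exact: spin_norm; first exact: tanh_bound.
  apply: (le_trans (tanh_lip _ _ _)).
  have -> : afield R n beta h (magsum R s - spin R (s i)) - (beta * mag R s + h) = - (beta * (spin R (s i) * n%:R^-1)).
    by rewrite /afield /mag; ring.
  rewrite normrN !normrM spin_norm mul1r (ger0_norm b0) (ger0_norm (ninv_ge0 R n)).
  by apply: ler_piMl => //; exact: ninv_ge0.
apply: le_trans (ler_sum _ (fun i _ => key i)).
rewrite sumrB sumr_const card_ord -mulr_sumr sumrB sumr_const card_ord -/(magsum R s).
have -> : magsum R s = n%:R * mag R s by rewrite /mag; field.
rewrite -/x.
have -> : 5 * n%:R^-1 *+ n = 5 :> R by rewrite -mulr_natr -mulrA mulVf // mulr1.
rewrite -[T *+ n]mulr_natr.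
have E : x * (n%:R * mag R s - T * n%:R) = n%:R * (x * (mag R s - T)) by ring.
by rewrite E.
Qed.


Lemma lower (s : config n) :
  (1 - beta) * (mag R s - m0) ^+ 2 <= (mag R s - m0) * (mag R s - tanhR (beta * mag R s + h)).
Proof.
set x := mag R s - m0; set T := tanhR _.
have hT : `|T - m0| <= beta * `|x|.
  rewrite /T [X in `|_ - X|]hm0; apply: (le_trans (tanh_lip _ _ _)).
  have -> : beta * mag R s + h - (beta * m0 + h) = beta * x by rewrite /x; ring.
  by rewrite normrM ger0_norm.
have h1 : x * (T - m0) <= beta * x ^+ 2.
  apply: (le_trans (ler_norm _)); rewrite normrM.
  have e2 : x ^+ 2 = `|x| ^+ 2 by rewrite real_normK ?num_real.
  rewrite e2 expr2; have := normr_ge0 x; have := normr_ge0 (T - m0); nra.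
have -> : x * (mag R s - T) = x ^+ 2 - x * (T - m0) by rewrite /x; ring.
lra.
Qed.

Lemma weight_gt0 (s : config n) : 0 < cw_weight beta h s.
Proof. exact: expR_gt0. Qed.

Lemma Z_gt0 : 0 < cw_Z beta h n.
Proof.
rewrite /cw_Z (bigD1 [ffun=> true]) //=.
apply: (lt_le_trans (weight_gt0 [ffun=> true])); rewrite lerDl sumr_ge0 // => s _.
exact: ltW (weight_gt0 s).
Qed.

Lemma expectE (f : config n -> R) :
  \sum_(s : config n) cw_P beta h s * f s = (\sum_(s : config n) cw_weight beta h s * f s) / cw_Z beta h n.
Proof. rewrite big_distrl /=; apply: eq_bigr => s _; rewrite /cw_P; ring. Qed.

Lemma P_sum1 : \sum_(s : config n) cw_P beta h s = 1.
Proof.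
have := expectE (fun _ => 1); under eq_bigr do rewrite mulr1; move=> ->.
under eq_bigr do rewrite mulr1.
by rewrite mulfV // gt_eqF // Z_gt0.
Qed.

Lemma P_ge0 (s : config n) : 0 <= cw_P beta h s.
Proof. by rewrite /cw_P divr_ge0 // ltW // ?weight_gt0 ?Z_gt0. Qed.

Hypothesis b1' : beta < 1.

Lemma Ex2_bound :
  \sum_(s : config n) cw_P beta h s * (mag R s - m0) ^+ 2 <= 5 / ((1 - beta) * n%:R).
Proof.
have Z0 := Z_gt0.
have np : 0 < n%:R :> R by rewrite ltr0n.
have bp : 0 < 1 - beta by rewrite subr_gt0.
rewrite expectE ler_pdivrMr // mulrAC ler_pdivlMr ?mulr_gt0 //.
have A : \sum_(s : config n) cw_weight beta h s * (n%:R * ((mag R s - m0) * (mag R s - tanhR (beta * mag R s + h))) - 5) <= 0.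
  have H0 : \sum_(s : config n) cw_weight beta h s * gsum s <= 0 by rewrite /gsum sum_g.
  apply: (le_trans _ H0).
  apply: ler_sum => s _; rewrite ler_pM2l ?weight_gt0 //; exact: pointwise.
have B : \sum_(s : config n) cw_weight beta h s * (n%:R * ((1 - beta) * (mag R s - m0) ^+ 2) - 5) <= 0.
  apply: le_trans A; apply: ler_sum => s _; rewrite ler_pM2l ?weight_gt0 // lerD2r.
  by rewrite ler_pM2l // lower.
move: B; under eq_bigr do rewrite mulrBr.
rewrite sumrB -mulr_suml -/(cw_Z beta h n) subr_le0.
have -> : \sum_(s : config n) cw_weight beta h s * (n%:R * ((1 - beta) * (mag R s - m0) ^+ 2)) =
   (1 - beta) * n%:R * \sum_(s : config n) cw_weight beta h s * (mag R s - m0) ^+ 2.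
  rewrite mulr_sumr; apply: eq_bigr => s _; ring.
by rewrite mulrC [_ * 5]mulrC.
Qed.

End D.


Lemma E_lin (R : realType) (beta h : R) n (a b : R) (f : config n -> R) :
  \sum_(s : config n) cw_P beta h s * (a * f s + b) = a * (\sum_(s : config n) cw_P beta h s * f s) + b.
Proof.
under eq_bigr do rewrite mulrDr.
rewrite big_split /= -mulr_suml P_sum1 mul1r mulr_sumr; congr (_ + _).
by apply: eq_bigr => s _; ring.
Qed.

Lemma abs_sqrt_bound (R : realType) (x r : R) : 0 < r ->
  `|x| <= (r ^+ 2 * x ^+ 2 + 1) / (2 * r).
Proof.
move=> r0; rewrite ler_pdivlMr ?mulr_gt0 //.
have e2 : x ^+ 2 = `|x| ^+ 2 by rewrite real_normK ?num_real.
rewrite e2; have := sqr_ge0 (r * `|x| - 1); rewrite !expr2; nra.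
Qed.

Theorem lemma8 (R : realType) (beta h m0 : R) :
  0 < beta -> beta < 1 ->
  m0 = tanhR (beta * m0 + h) ->
  exists C : R, forall (n : nat), (0 < n)%N ->
    forall k : R, (k = 2 \/ k = -2) ->
      (forall s : config n,
         `|Qk beta h k s - (1 - m0 ^+ 2) / 4| <= C * (`|mag R s - m0| + n%:R^-1)
         /\ `|Qkk beta h k s - Qk beta h k s ^+ 2| <= C / n%:R)
      /\ `|qk beta h n k - (1 - m0 ^+ 2) / 4| <= C / Num.sqrt n%:R
      /\ varQk beta h n k <= C / n%:R.
Proof.
move=> bp bl1 hm0.
have b0 : 0 <= beta := ltW bp.
have b1 : beta <= 1 := ltW bl1.
set c := (1 - m0 ^+ 2) / 4.
set D := 5 / (1 - beta).
have D0 : 0 <= D by rewrite /D divr_ge0 // subr_ge0.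
set B := D + 2.
exists (4 * D + 4 + 2 * B ^+ 2).
set C := 4 * D + 4 + 2 * B ^+ 2.
have BC : B <= C by rewrite /C /B; nra.
have C2 : 2 <= C by rewrite /C /B; nra.
move=> n n0 k hk.
have [e [he ->]] : exists e : R, (e = 1 \/ e = -1) /\ k = 2 * e.
  case: hk => ->; [exists 1 | exists (-1)]; split.
  - by left.
  - by rewrite mulr1.
  - by right.
  - by rewrite mulrN1.
have np : 0 < n%:R :> R by rewrite ltr0n.
have n1 : 1 <= n%:R :> R by rewrite ler1n.
have ni0 := ninv_ge0 R n.
have mb : forall s : config n, `|mag R s| <= 1.
  move=> s; rewrite /mag normrM (ger0_norm ni0) ler_pdivrMr // mul1r.
  exact: magsum_bound.
have P1 : forall s : config n, `|Qk beta h (2 * e) s - c| <= `|mag R s - m0| + n%:R^-1.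
  move=> s; rewrite QkE //; exact: Psi_P1.
set r := Num.sqrt n%:R.
have r0 : 0 < r by rewrite /r sqrtr_gt0.
have r2 : r ^+ 2 = n%:R by rewrite /r sqr_sqrtr // ltW.
have r1 : 1 <= r by have := r2; rewrite expr2 => r2'; nra.
have nr : n%:R^-1 <= r^-1.
  rewrite lef_pV2 ?posrE //; rewrite -r2 expr2; nra.
have EX := @Ex2_bound R n beta h m0 b0 b1 hm0 n0 bl1.
set EX2 := \sum_(s : config n) _ in EX.
have EX0 : 0 <= EX2 by rewrite sumr_ge0 // => s _; rewrite mulr_ge0 ?P_ge0 ?sqr_ge0.
have EXn : n%:R * EX2 <= D.
  move: EX; rewrite /D invfM mulrA ler_pdivlMr //; by rewrite mulrC.
have P3 : `|qk beta h n (2 * e) - c| <= B / r.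
  have -> : qk beta h n (2 * e) - c = \sum_(s : config n) cw_P beta h s * (Qk beta h (2 * e) s - c).
    rewrite /qk -[c in LHS]mul1r -(P_sum1 R n beta h) mulr_suml -sumrB.
    by apply: eq_bigr => s _; ring.
  apply: (le_trans (ler_norm_sum _ _ _)).
  apply: le_trans (_ : \sum_(s : config n) cw_P beta h s * ((n%:R / (2 * r)) * (mag R s - m0) ^+ 2 + 3 / (2 * r)) <= _).
    apply: ler_sum => s _; rewrite normrM (ger0_norm (P_ge0 _ _ _ _ _)).
    apply: ler_wpM2l; first exact: P_ge0.
    apply: (le_trans (P1 s)).
    have := @abs_sqrt_bound R (mag R s - m0) r r0; rewrite r2.
    have : n%:R^-1 <= 2 / (2 * r) by rewrite (_ : 2 / (2 * r) = r^-1) //; field; rewrite gt_eqF.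
    have -> : n%:R / (2 * r) * (mag R s - m0) ^+ 2 + 3 / (2 * r) = (n%:R * (mag R s - m0) ^+ 2 + 1) / (2 * r) + 2 / (2 * r).
      by field; rewrite gt_eqF.
    lra.
  rewrite E_lin.
  have -> : n%:R / (2 * r) * EX2 + 3 / (2 * r) = (n%:R * EX2 + 3) / (2 * r) by field; rewrite gt_eqF.
  rewrite ler_pdivrMr ?mulr_gt0 // (_ : B / r * (2 * r) = 2 * B); last by field; rewrite gt_eqF.
  rewrite /B; lra.
split.
  move=> s; split.
    by apply: (le_trans (P1 s)); apply: ler_peMl; [rewrite addr_ge0 | lra].
  rewrite QkkE // QkE //.
  set p := Psi R n beta h e (mag R s); set p' := Psi R n beta h e _.
  have -> : p * p' - p ^+ 2 = p * (p' - p) by ring.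
  rewrite normrM.
  have hp : `|p| <= 1 by apply: Psi_P3.
  have hp' : `|p' - p| <= 2 / n%:R by apply: Psi_P2.
  have : 2 / n%:R <= C / n%:R by rewrite ler_pM2r ?invr_gt0.
  have := normr_ge0 p; have := normr_ge0 (p' - p); nra.
split.
  apply: (le_trans P3); rewrite ler_pM2r ?invr_gt0 //.
rewrite /varQk.
set q := qk beta h n (2 * e).
apply: le_trans (_ : \sum_(s : config n) cw_P beta h s * (4 * (mag R s - m0) ^+ 2 + (4 + 2 * B ^+ 2) / n%:R) <= _).
  apply: ler_sum => s _; apply: ler_wpM2l; first exact: P_ge0.
  set Q := Qk beta h (2 * e) s.
  have h1 : (Q - q) ^+ 2 <= 2 * (Q - c) ^+ 2 + 2 * (q - c) ^+ 2 by have := sqr_ge0 (Q + q - 2 * c); nra.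
  have h2 : (q - c) ^+ 2 <= B ^+ 2 / n%:R.
    rewrite -r2 -expr_div_n -real_normK ?num_real //.
    rewrite lerXn2r ?nnegrE //; first [exact: P3 | exact: normr_ge0 | (apply: divr_ge0; [rewrite /B; lra | exact: ltW])].
  have h3 : (Q - c) ^+ 2 <= 2 * (mag R s - m0) ^+ 2 + 2 / n%:R.
    have := P1 s; rewrite -/Q => H.
    rewrite -real_normK ?num_real //.
    have e2 : (mag R s - m0) ^+ 2 = `|mag R s - m0| ^+ 2 by rewrite real_normK ?num_real.
    have : n%:R^-1 ^+ 2 <= n%:R^-1 :> R.
      by rewrite expr2 ler_piMl // invf_le1.
    rewrite e2 -[2 / n%:R]/(2 * n%:R^-1).
    move: H; have := normr_ge0 (Q - c); have := normr_ge0 (mag R s - m0).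
    move: (`|Q - c|) (`|mag R s - m0|) (n%:R^-1) ni0 => a b t t0 b0' a0 H tt.
    have sq : a * a <= (b + t) * (b + t) by apply: ler_pM.
    have := sqr_ge0 (b - t); rewrite !expr2 in tt *; nra.
  have -> : (4 + 2 * B ^+ 2) / n%:R = 4 / n%:R + 2 * (B ^+ 2 / n%:R) by rewrite mulrDl mulrA.
  rewrite -[4 / n%:R]/(4 * n%:R^-1) -[2 / n%:R]/(2 * n%:R^-1) in h3 *. lra.
rewrite E_lin.
rewrite ler_pdivlMr // mulrDl mulfVK ?gt_eqF //.
have : 4 * EX2 * n%:R <= 4 * D by nra.
rewrite -/EX2 /C; lra.
Qed.
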